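(* Let $G$ be a finite group and $K$ an idempotent semifield. Let $V$ and $W$ be indecomposable representations of $G$ over $K$, and let $H_V$ and $H_W$ be subgroups of $G$ corresponding to $V$ and $W$ respectively (i.e. $H_V$ is the stabilizer in $G$ of some basis line of $V$, and $H_W$ the stabilizer of some basis line of $W$). Then the set of homomorphisms of representations $\phi:V\to W$ is in bijective correspondence with the set of all functions $H_V\backslash G/H_W\to K$, where $H_V\backslash G/H_W$ denotes the set of double cosets $H_V g H_W$, $g\in G$.
   Context: All semirings are commutative. A semifield is a semiring $K$ with $K\setminus\{0\}$ a multiplicative group; it is idempotent if $a+a=a$ for all $a$. A representation of $G$ over $K$ is a $K$-linear action of $G$ on a free module $K^n$ (equivalently a group homomorphism $G\to\mathrm{GL}_n(K)$). A homomorphism of representations $\phi:V\to W$ is a $K$-module homomorphism with $\phi(gv)=g\phi(v)$ for all $g\in G$, $v\in V$. A representation is indecomposable if it is not a direct sum of two nontrivial $G$-stable submodules. A basis line of a free $K$-module is a submodule spanned by one vector of a basis; the set of basis lines is independent of the basis and $G$ acts on it by $g\cdot\mathrm{span}(v)=\mathrm{span}(gv)$. *)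

(* Defs.v *)
From HB Require Import structures.
From mathcomp Require Import all_boot all_order all_fingroup all_algebra.
Set Implicit Arguments. Unset Strict Implicit. Unset Printing Implicit Defensive.
Import GRing.Theory.
Local Open Scope ring_scope.

(* Semifields: K \ {0} is a multiplicative group (1 <> 0 is built into
   comNzSemiRingType; commutativity/associativity come from the structure). *)
Definition semifield (K : comNzSemiRingType) : Prop :=
  forall a : K, a != 0 -> exists b : K, a * b = 1.

Definition idempotent_semiring (K : comNzSemiRingType) : Prop :=
  forall a : K, a + a = a.

Section Rep.
Variables (K : comNzSemiRingType) (gT : finGroupType) (G : {group gT}).

(* A representation of G on K^n (column vectors, left action g.v = rho g *m v)
   is a group homomorphism G -> GL_n(K); a monoid homomorphism from a group
   automatically lands in invertible matrices. *)
Definition is_rep (n : nat) (rho : gT -> 'M[K]_n) : Prop :=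
  rho 1%g = 1%:M /\
  forall g h, g \in G -> h \in G -> rho (g * h)%g = rho g *m rho h.

Definition submodule (n : nat) (U : 'cV[K]_n -> Prop) : Prop :=
  U 0 /\ (forall u v, U u -> U v -> U (u + v)) /\
  (forall (a : K) u, U u -> U (a *: u)).

Definition G_stable (n : nat) (rho : gT -> 'M[K]_n) (U : 'cV[K]_n -> Prop) :=
  forall g u, g \in G -> U u -> U (rho g *m u).

Definition nontrivial_sub (n : nat) (U : 'cV[K]_n -> Prop) :=
  exists u, U u /\ u <> 0.

Definition direct_sum (n : nat) (U1 U2 : 'cV[K]_n -> Prop) : Prop :=
  forall v, exists u1 u2, [/\ U1 u1, U2 u2, v = u1 + u2 &
    (forall w1 w2, U1 w1 -> U2 w2 -> v = w1 + w2 -> w1 = u1 /\ w2 = u2)].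

Definition indecomposable (n : nat) (rho : gT -> 'M[K]_n) : Prop :=
  (0 < n)%N /\
  ~ exists U1 U2, [/\ submodule U1 /\ submodule U2,
                      G_stable rho U1 /\ G_stable rho U2,
                      nontrivial_sub U1 /\ nontrivial_sub U2 &
                      direct_sum U1 U2].

Definition is_basis (n k : nat) (b : 'I_k -> 'cV[K]_n) : Prop :=
  forall v, exists c : 'I_k -> K, v = \sum_(i < k) c i *: b i /\
    forall c' : 'I_k -> K, v = \sum_(i < k) c' i *: b i -> forall i, c' i = c i.

Definition line_of (n : nat) (x : 'cV[K]_n) : 'cV[K]_n -> Prop :=
  fun y => exists a : K, y = a *: x.

Definition basis_line (n : nat) (L : 'cV[K]_n -> Prop) : Prop :=
  exists k (b : 'I_k -> 'cV[K]_n) (i : 'I_k),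
    is_basis b /\ forall y, L y <-> line_of (b i) y.

Definition stabilizer_of (n : nat) (rho : gT -> 'M[K]_n)
    (L : 'cV[K]_n -> Prop) (H : {set gT}) : Prop :=
  forall g, g \in H <->
    (g \in G /\ forall y, L y <-> exists x, L x /\ y = rho g *m x).

Definition corresponding_subgroup (n : nat) (rho : gT -> 'M[K]_n)
    (H : {group gT}) : Prop :=
  exists L, basis_line L /\ stabilizer_of rho L H.

Definition rep_hom (n m : nat) (rhoV : gT -> 'M[K]_n) (rhoW : gT -> 'M[K]_m)
    (phi : 'cV[K]_n -> 'cV[K]_m) : Prop :=
  [/\ forall u v, phi (u + v) = phi u + phi v,
      forall (a : K) u, phi (a *: u) = a *: phi u &
      (forall g v, g \in G -> phi (rhoV g *m v) = rhoW g *m phi v)].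
End Rep.

Definition dcosets (gT : finGroupType) (HV G HW : {set gT}) : {set {set gT}} :=
  [set (HV :* g) * HW | g in G]%g.

(* Main.v *)
Require Import Defs.
From HB Require Import structures.
From mathcomp Require Import all_boot all_order all_fingroup all_algebra.
From Stdlib Require Import FunctionalExtensionality ProofIrrelevance.
Set Implicit Arguments. Unset Strict Implicit. Unset Printing Implicit Defensive.
Import GRing.Theory.
Local Open Scope ring_scope.

Section KFacts.
Variable K : comNzSemiRingType.
Hypothesis Ksf : semifield K.
Hypothesis Kid : idempotent_semiring K.

Lemma add_eq0l (a b : K) : a + b = 0 -> a = 0.
Proof.
move=> h; have -> : a = a + (a + b) by rewrite h addr0.
by rewrite addrA Kid h.
Qed.

Lemma sum_eq0P (I : finType) (A : {pred I}) (f : I -> K) :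
  \sum_(i in A) f i = 0 -> forall i, i \in A -> f i = 0.
Proof.
move=> h i iA; move: h; rewrite (bigD1 i) //=; exact: add_eq0l.
Qed.

Lemma mul_neq0 (a b : K) : a != 0 -> b != 0 -> a * b != 0.
Proof.
move=> a0 b0; apply/eqP=> h; have [c hc] := Ksf a0.
move/eqP: b0; apply; by rewrite -[b]mul1r -hc mulrC mulrA (mulrC b) h mul0r.
Qed.

Lemma mulK_cancel (a b c : K) : a != 0 -> a * b = a * c -> b = c.
Proof.
move=> a0 h; have [d hd] := Ksf a0.
by rewrite -[b]mul1r -[c]mul1r -hd (mulrC a) -!mulrA h.
Qed.

Lemma natmul_idem (c : K) k : c *+ k.+1 = c.
Proof. by elim: k => // k IH; rewrite mulrS IH Kid. Qed.

Lemma sum_if_const (I : finType) (A : {pred I}) (P : pred I) (c : K) :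
  (exists2 i, i \in A & P i) ->
  \sum_(i in A) (if P i then c else 0) = c.
Proof.
case=> i iA Pi; rewrite -big_mkcondr /= big_const.
have : (0 < #|[pred j in A | P j]|)%N by apply/card_gt0P; exists i; rewrite inE iA.
case: #|_| => // k _; rewrite -/(iter _ _ _).
have -> : forall k, iter k.+1 (+%R c) 0 = c *+ k.+1.
  elim=> [|k' IH]; first by rewrite /= addr0.
  by rewrite iterS IH [in RHS]mulrS.
by rewrite natmul_idem.
Qed.

Lemma torsion_free (a : K) N : (0 < N)%N -> a ^+ N = 1 -> a = 1.
Proof.
case: N => // N _ aN.
set s := \sum_(i < N.+1) a ^+ i.
have as_s : a * s = s.
  rewrite /s mulr_sumr.
  under eq_bigr => i _ do rewrite -exprS.
  by rewrite big_ord_recr /= aN big_ord_recl /= expr0 addrC.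
have s0 : s != 0.
  apply/eqP=> /(sum_eq0P (A := predT)) h.
  by move: (h ord0 isT); rewrite expr0; apply/eqP; exact: oner_neq0.
apply: (@mulK_cancel s) => //; by rewrite mulrC as_s mulr1.
Qed.

Lemma sum_eq0T (I : finType) (f : I -> K) :
  \sum_(i : I) f i = 0 -> forall i, f i = 0.
Proof. move=> h i; move: h; rewrite (bigD1 i) //=; exact: add_eq0l. Qed.

Lemma sum_neq0_ex (I : finType) (f : I -> K) :
  \sum_(i : I) f i != 0 -> exists i, f i != 0.
Proof.
move=> h; case: (pickP (fun i => f i != 0)) => [i hi|none]; first by exists i.
by move: h; rewrite big1 ?eqxx // => i _; apply/eqP; move: (none i) => /negbFE.
Qed.

Lemma col_mono n k (P : 'M[K]_(n,k)) (Q : 'M[K]_(k,n)) :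
  P *m Q = 1%:M -> Q *m P = 1%:M ->
  forall i, exists j, P j i != 0 /\ forall j', j' != j -> P j' i = 0.
Proof.
move=> PQ QP i.
have h : \sum_j Q i j * P j i = 1.
  by move: (congr1 (fun M : 'M[K]_k => M i i) QP); rewrite !mxE eqxx mulr1n.
have [j hj] : exists j, Q i j * P j i != 0.
  by apply: sum_neq0_ex; rewrite h oner_neq0.
exists j; split.
  by apply: contraNneq hj => ->; rewrite mulr0.
move=> j' j'j.
have h2 : \sum_l P j' l * Q l j = 0.
  by move: (congr1 (fun M : 'M[K]_n => M j' j) PQ); rewrite !mxE (negbTE j'j) mulr0n.
have := sum_eq0T h2 i; apply: contra_eq => hP.
apply: mul_neq0 => //; by apply: contraNneq hj => ->; rewrite mul0r.
Qed.

Section Rep1.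
Variables (gT : finGroupType) (G : {group gT}) (n : nat) (rho : gT -> 'M[K]_n).
Hypothesis rep : is_rep G rho.

Lemma rhoM g h : g \in G -> h \in G -> rho (g * h)%g = rho g *m rho h.
Proof. by case: rep => _; apply. Qed.
Lemma rho1 : rho 1%g = 1%:M.
Proof. by case: rep. Qed.

Lemma rho_inv g : g \in G -> rho g *m rho g^-1 = 1%:M /\ rho g^-1 *m rho g = 1%:M.
Proof.
move=> gG; split; rewrite -rhoM ?groupV // ?mulgV ?mulVg; exact: rho1.
Qed.

Definition sgm g q := odflt q [pick p | rho g p q != 0].

Lemma sig_col g q : g \in G ->
  rho g (sgm g q) q != 0 /\ forall p, p != sgm g q -> rho g p q = 0.
Proof.
move=> gG; have [PQ QP] := rho_inv gG.
have [j [hj hj']] := col_mono PQ QP q.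
have -> : sgm g q = j.
  rewrite /sgm; case: pickP => [p hp|none] /=.
    by apply/eqP; apply: contraNT hp => /hj' ->; rewrite eqxx.
  by move: (none j); rewrite hj.
by split.
Qed.

Lemma col_eq g p q : g \in G -> rho g p q != 0 -> p = sgm g q.
Proof.
move=> gG; have [_ h] := sig_col q gG.
by case: (eqVneq p (sgm g q)) => // /h ->; rewrite eqxx.
Qed.

Lemma row_uniq g p q q' : g \in G -> rho g p q != 0 -> rho g p q' != 0 -> q = q'.
Proof.
move=> gG; have [PQ QP] := rho_inv gG.
have PQ' : (rho g)^T *m (rho g^-1)^T = 1%:M by rewrite -trmx_mul QP trmx1.
have QP' : (rho g^-1)^T *m (rho g)^T = 1%:M by rewrite -trmx_mul PQ trmx1.
have [j [hj hj']] := col_mono PQ' QP' p.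
move=> h1 h2.
have e1 : q = j.
  by apply/eqP; apply: contraNT h1 => /hj'; rewrite mxE => ->; rewrite eqxx.
have e2 : q' = j.
  by apply/eqP; apply: contraNT h2 => /hj'; rewrite mxE => ->; rewrite eqxx.
by rewrite e1 e2.
Qed.

Lemma coordM g r k (B : 'M[K]_(n,k)) q : g \in G ->
  (rho g *m B) (sgm g r) q = rho g (sgm g r) r * B r q.
Proof.
move=> gG; rewrite mxE (bigD1 r) //= big1 ?addr0 // => r' r'r.
case: (eqVneq (rho g (sgm g r) r') 0) => [->|h]; first by rewrite mul0r.
have [h1 _] := sig_col r gG.
by move: r'r; rewrite (row_uniq gG h h1) eqxx.
Qed.

Lemma sigM g h q : g \in G -> h \in G -> sgm (g * h)%g q = sgm g (sgm h q).
Proof.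
move=> gG hG; symmetry; apply: col_eq; first by rewrite groupM.
rewrite rhoM // coordM //; apply: mul_neq0; [exact: (sig_col _ gG).1|exact: (sig_col _ hG).1].
Qed.

Lemma sig1 q : sgm 1%g q = q.
Proof. by symmetry; apply: col_eq; rewrite ?group1 // rho1 mxE eqxx mulr1n oner_neq0. Qed.

Lemma sigVK g q : g \in G -> sgm g^-1 (sgm g q) = q.
Proof. by move=> gG; rewrite -sigM ?groupV // mulVg sig1. Qed.

Lemma sigKV g q : g \in G -> sgm g (sgm g^-1 q) = q.
Proof. by move=> gG; rewrite -sigM ?groupV // mulgV sig1. Qed.

Lemma rho_delta g q : g \in G ->
  rho g *m delta_mx q 0 = rho g (sgm g q) q *: (delta_mx (sgm g q) 0 : 'cV_n).
Proof.
move=> gG; rewrite -colE; apply/matrixP=> p z; rewrite !mxE ord1 eqxx andbT.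
case: (eqVneq p (sgm g q)) => [->|h]; first by rewrite mulr1.
by rewrite mulr0 (sig_col q gG).2.
Qed.


Notation e j := (delta_mx j 0 : 'cV[K]_n).

Lemma basis_line_std L : basis_line L -> exists j, forall y, L y <-> line_of (e j) y.
Proof.
case=> k [b [i [bb hL]]].
have [c hc] : exists c : 'I_n -> ('I_k -> K), forall j, e j = \sum_l c j l *: b l.
  apply: (@fin_all_exists _ (fun _ => 'I_k -> K) (fun j c => e j = \sum_l c l *: b l)) => j.
  by have [c [hc _]] := bb (e j); exists c.
have [cb [_ hbu]] := bb (b i).
have r1 : b i = \sum_l ((i == l)%:R : K) *: b l.
  rewrite (bigD1 i) //= eqxx scale1r big1 ?addr0 // => l li.
  by rewrite eq_sym (negbTE li) scale0r.
have r2 : b i = \sum_l (\sum_j b i j 0 * c j l) *: b l.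
  transitivity (\sum_j b i j 0 *: e j).
    rewrite {1}[b i]matrix_sum_delta; apply: eq_bigr => j _; by rewrite big_ord1.
  rewrite (eq_bigr (fun j => \sum_l (b i j 0 * c j l) *: b l)); last first.
    move=> j _; rewrite hc scaler_sumr; apply: eq_bigr => l _; by rewrite scalerA.
  rewrite exchange_big /=; apply: eq_bigr => l _; by rewrite scaler_suml.
have key : \sum_j b i j 0 * c j i = 1.
  have e2 := hbu (fun l => \sum_j b i j 0 * c j l) r2 i.
  have e1 := hbu (fun l => ((i == l)%:R : K)) r1 i.
  rewrite /= eqxx in e1; by rewrite e2 -e1.
have [j hj] : exists j, b i j 0 * c j i != 0.
  by apply: sum_neq0_ex; rewrite key oner_neq0.
have b0 : b i j 0 != 0 by apply: contraNneq hj => ->; rewrite mul0r.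
have c0 : c j i != 0 by apply: contraNneq hj => ->; rewrite mulr0.
have bi : b i = b i j 0 *: e j.
  apply/matrixP=> p z; rewrite ord1 !mxE eqxx andbT.
  case: (eqVneq p j) => [->|pj]; first by rewrite mulr1.
  rewrite mulr0.
  have h0 : (e j) p 0 = 0 by rewrite mxE (negbTE pj).
  move: h0; rewrite hc summxE => /sum_eq0T /(_ i); rewrite mxE.
  by apply: contra_eq => hb; apply: mul_neq0.
exists j => y; split.
  by move/hL; case=> a ->; exists (a * b i j 0); rewrite {1}bi scalerA.
case=> a ->; apply/hL; have [d hd] := Ksf b0; exists (a * d).
by rewrite bi scalerA -mulrA (mulrC d) hd mulr1.
Qed.

Lemma stab_char L (H : {set gT}) j0 : (forall y, L y <-> line_of (e j0) y) ->
  stabilizer_of G rho L H -> forall g, (g \in H) = (g \in G) && (sgm g j0 == j0).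
Proof.
move=> hL hS g; apply/idP/andP.
  move/hS => [gG hg]; split => //.
  have : L (e j0) by apply/hL; exists 1; rewrite scale1r.
  move/hg => [x [/hL [a ->] ex]].
  rewrite -scalemxAr rho_delta // scalerA in ex.
  case: (eqVneq (sgm g j0) j0) => // hne.
  move: (congr1 (fun M : 'cV[K]_n => M j0 0) ex); rewrite !mxE eqxx.
  by rewrite eq_sym (negbTE hne) /= mulr0 => /eqP; rewrite oner_eq0.
case=> gG /eqP sj; apply/hS; split => // y.
have b0 : rho g j0 j0 != 0 by have := (sig_col j0 gG).1; rewrite sj.
have rd : rho g *m e j0 = rho g j0 j0 *: e j0 by rewrite rho_delta // sj.
split.
  move/hL => [a ->]; have [d hd] := Ksf b0; exists ((a * d) *: e j0); split.
    by apply/hL; exists (a * d).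
  by rewrite -scalemxAr rd scalerA -mulrA (mulrC d) hd mulr1.
by case=> x [/hL [a ->] ->]; apply/hL; exists (a * rho g j0 j0); rewrite -scalemxAr rd scalerA.
Qed.

Lemma triv_char (H : {set gT}) j0 :
  (forall g, (g \in H) = (g \in G) && (sgm g j0 == j0)) ->
  forall h, h \in H -> rho h j0 j0 = 1.
Proof.
move=> hH h hh; move: (hh); rewrite hH => /andP [hG /eqP sh].
have pw : forall N, rho (h ^+ N)%g j0 j0 = rho h j0 j0 ^+ N.
  elim=> [|N IH]; first by rewrite expg0 rho1 mxE eqxx mulr1n expr0.
  rewrite expgS rhoM ?groupX //.
  have := @coordM h j0 _ (rho (h ^+ N)%g) j0 hG; rewrite sh => ->.
  by rewrite IH exprS.
apply: (torsion_free (order_gt0 h)); by rewrite -pw expg_order rho1 mxE eqxx mulr1n.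
Qed.

Lemma transitive_ind j0 : indecomposable G rho -> forall k, exists2 t, t \in G & sgm t j0 = k.
Proof.
move=> [n0 hnd] k.
pose O := [set sgm g j0 | g in G].
case: (boolP (k \in O)) => [/imsetP [t tG ->] | kO]; first by exists t.
exfalso; apply: hnd.
have closO : forall g p, g \in G -> (sgm g p \in O) = (p \in O).
  move=> g p gG; apply/imsetP/imsetP => [[t tG ht]|[t tG ->]].
    exists (g^-1 * t)%g; first by rewrite groupM ?groupV.
    by rewrite sigM ?groupV // -ht sigVK.
  by exists (g * t)%g; [rewrite groupM | rewrite sigM].
have j0O : j0 \in O by apply/imsetP; exists 1%g; rewrite ?group1 ?sig1.
exists (fun v : 'cV[K]_n => forall p, p \notin O -> v p 0 = 0),
       (fun v : 'cV[K]_n => forall p, p \in O -> v p 0 = 0).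
split.
- split; split.
  + by move=> p _; rewrite mxE.
  + split; first by move=> u v hu hv p hp; rewrite mxE hu // hv // addr0.
    by move=> a u hu p hp; rewrite mxE hu // mulr0.
  + by move=> p _; rewrite mxE.
  + split; first by move=> u v hu hv p hp; rewrite mxE hu // hv // addr0.
    by move=> a u hu p hp; rewrite mxE hu // mulr0.
- split => g u gG hu p hp; rewrite mxE big1 // => r _;
  (case: (eqVneq (rho g p r) 0) => [->|h]; first by rewrite mul0r);
  have pr := col_eq gG h; rewrite hu ?mulr0 //; by rewrite -(closO g r gG) -pr.
- split.
  + exists (e j0); split.
      by move=> p hp; rewrite mxE; case: (eqVneq p j0) hp => [->|]; rewrite ?j0O.
    by move/matrixP/(_ j0 0); rewrite !mxE !eqxx /= => /eqP; rewrite oner_eq0.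
  + exists (e k); split.
      by move=> p hp; rewrite mxE; case: (eqVneq p k) hp => [->|]; rewrite ?(negbTE kO).
    by move/matrixP/(_ k 0); rewrite !mxE !eqxx /= => /eqP; rewrite oner_eq0.
- move=> v.
  exists (\col_p (if p \in O then v p 0 else 0)), (\col_p (if p \in O then 0 else v p 0)).
  split.
  + by move=> p hp; rewrite mxE (negbTE hp).
  + by move=> p hp; rewrite mxE hp.
  + by apply/matrixP=> p z; rewrite ord1 !mxE; case: (p \in O); rewrite ?addr0 ?add0r.
  + move=> w1 w2 h1 h2 ->; split; apply/matrixP => p z; rewrite ord1 !mxE;
    by case: (boolP (p \in O)) => hp; (try rewrite (h2 p hp)); (try rewrite (h1 p hp)); rewrite ?addr0 ?add0r.
Qed.


Section Stab.
Variables (H : {set gT}) (j0 : 'I_n).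
Hypothesis hH : forall g, (g \in H) = (g \in G) && (sgm g j0 == j0).

Lemma stabG h : h \in H -> h \in G.
Proof. by rewrite hH => /andP []. Qed.

Lemma stab_sig h : h \in H -> sgm h j0 = j0.
Proof. by rewrite hH => /andP [_ /eqP]. Qed.

Lemma stab_fix h : h \in H -> rho h *m e j0 = e j0.
Proof.
move=> hh; by rewrite (rho_delta _ (stabG hh)) stab_sig // (triv_char hH hh) scale1r.
Qed.

Lemma stab_coord h k (B : 'M[K]_(n,k)) q : h \in H -> (rho h *m B) j0 q = B j0 q.
Proof.
move=> hh; have := @coordM h j0 _ B q (stabG hh).
by rewrite stab_sig // (triv_char hH hh) mul1r.
Qed.

Lemma stab_ind g : g \in G -> (rho g *m e j0) j0 0 = if g \in H then 1 else 0.
Proof.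
move=> gG; rewrite rho_delta // mxE mxE eqxx andbT hH gG /= eq_sym.
case: eqP => [sj|_]; last by rewrite mulr0.
have hg : g \in H by rewrite hH gG sj eqxx.
by rewrite mulr1 sj (triv_char hH hg).
Qed.
End Stab.

End Rep1.

Lemma dc_eq (gT : finGroupType) (A B : {group gT}) h x h' : h \in A -> h' \in B ->
  (A :* (h * x * h') * B = A :* x * B)%g.
Proof.
move=> hA hB; by rewrite rcosetM rcosetM rcoset_id // -mulgA lcoset_id.
Qed.

Lemma sig_eq (A : Type) (P : A -> Prop) (a b : A) (pa : P a) (pb : P b) :
  a = b -> exist P a pa = exist P b pb.
Proof. move=> e; subst; f_equal; apply: proof_irrelevance. Qed.

Section Homs.
Variables (gT : finGroupType) (G : {group gT}) (n m : nat).
Variables (rV : gT -> 'M[K]_n) (rW : gT -> 'M[K]_m) (HV HW : {group gT}).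
Variables (jV : 'I_n) (jW : 'I_m).
Hypotheses (repV : is_rep G rV) (repW : is_rep G rW).
Hypothesis hHV : forall g, (g \in HV) = (g \in G) && (sgm rV g jV == jV).
Hypothesis hHW : forall g, (g \in HW) = (g \in G) && (sgm rW g jW == jW).
Hypothesis trV : forall k, exists2 t, t \in G & sgm rV t jV = k.
Hypothesis trW : forall k, exists2 t, t \in G & sgm rW t jW = k.

Local Notation eV j := (delta_mx j 0 : 'cV[K]_n).
Local Notation eW j := (delta_mx j 0 : 'cV[K]_m).
Local Notation DC := {D : {set gT} | D \in dcosets HV G HW}.
Local Notation hom := (rep_hom G rV rW).

Definition coef (phi : 'cV[K]_n -> 'cV[K]_m) (x : gT) : K :=
  (rW (x^-1)%g *m phi (eV jV)) jW 0.
Definition Fext (F : DC -> K) (D : {set gT}) : K :=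
  if insub D is Some d then F d else 0.
Definition phiF (F : DC -> K) (v : 'cV[K]_n) : 'cV[K]_m :=
  \sum_(g in G) \sum_(y in G)
    (Fext F (HV :* (g^-1 * y) * HW)%g * (rV (g^-1)%g *m v) jV 0) *: (rW y *m eW jW).

Lemma phiF_hom F : hom (phiF F).
Proof.
split.
- move=> u v; rewrite /phiF -big_split; apply: eq_bigr => g _.
  rewrite -big_split; apply: eq_bigr => y _ /=.
  by rewrite mulmxDr mxE mulrDr scalerDl.
- move=> a u; rewrite /phiF scaler_sumr; apply: eq_bigr => g _.
  rewrite scaler_sumr; apply: eq_bigr => y _.
  by rewrite -scalemxAr mxE scalerA mulrCA.
- move=> g0 v g0G; rewrite /phiF mulmx_sumr (reindex_inj (mulgI g0)) /=.
  apply: eq_big => [g|g gG]; first by rewrite groupMl.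
  rewrite mulmx_sumr (reindex_inj (mulgI g0)) /=.
  apply: eq_big => [y|y yG]; first by rewrite groupMl.
  have gG' : g \in G by rewrite -(groupMl _ g0G).
  have yG' : y \in G by rewrite -(groupMl _ g0G).
  have e1 : ((g0 * g)^-1 * (g0 * y) = g^-1 * y)%g.
    by rewrite invMg -!mulgA mulKg.
  have e2 : rV ((g0 * g)^-1)%g *m (rV g0 *m v) = rV (g^-1)%g *m v.
    rewrite invMg (rhoM repV) ?groupV // -mulmxA (mulmxA (rV (g0^-1)%g) (rV g0)).
    by rewrite (rho_inv repV g0G).2 mul1mx.
  by rewrite e1 e2 -scalemxAr (rhoM repW) // mulmxA.
Qed.

Lemma Fext_val F (D : DC) : Fext F (val D) = F D.
Proof. by rewrite /Fext valK. Qed.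

Lemma dcP x : x \in G -> (HV :* x * HW)%g \in dcosets HV G HW.
Proof. by move=> xG; apply/imsetP; exists x. Qed.

Lemma dc_mem z x : z \in (HV :* x * HW)%g ->
  exists h, exists h', [/\ h \in HV, h' \in HW & z = h * x * h']%g.
Proof. by move/mulsgP => [y h' /rcosetP [h hH ->] h'H ->]; exists h, h'. Qed.

Lemma dc_self x : x \in (HV :* x * HW)%g.
Proof. by apply/mulsgP; exists x 1%g; rewrite ?rcoset_refl ?group1 ?mulg1. Qed.

Lemma dc_repr D : D \in dcosets HV G HW -> repr D \in G /\ (HV :* repr D * HW)%g = D.
Proof.
move=> /imsetP [x xG ->].
have [h [h' [hh hh' ->]]] := dc_mem (mem_repr _ (dc_self x)).
split; last exact: dc_eq.
have := stabG hHV hh; have := stabG hHW hh'; move=> *; by rewrite !groupM.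
Qed.

Lemma coef_inv phi : hom phi -> forall h x h', h \in HV -> x \in G -> h' \in HW ->
  coef phi (h * x * h')%g = coef phi x.
Proof.
move=> [_ _ heq] h x h' hh xG hh'.
have hG := stabG hHV hh; have h'G := stabG hHW hh'.
rewrite /coef !invMg.
have e : rW (h'^-1 * (x^-1 * h^-1))%g = rW (h'^-1)%g *m (rW (x^-1)%g *m rW (h^-1)%g).
  rewrite -(rhoM repW) ?groupV //. apply: (rhoM repW); by rewrite ?groupV ?groupM ?groupV.
rewrite e.
rewrite -!mulmxA -heq ?groupV // (stab_fix repV hHV) ?groupV //.
by rewrite (stab_coord repW hHW) ?groupV.
Qed.

Lemma coef_repr phi (hp : hom phi) x : x \in G ->
  coef phi (repr (HV :* x * HW)%g) = coef phi x.
Proof.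
move=> xG; have [h [h' [hh hh' ->]]] := dc_mem (mem_repr _ (dc_self x)).
exact: coef_inv.
Qed.

Lemma coef_phiF F (D : DC) : coef (phiF F) (repr (val D)) = F D.
Proof.
case: D => D hD /=; have [xG eD] := dc_repr hD.
set x := repr D in xG eD *.
rewrite /coef /phiF mulmx_sumr summxE.
transitivity (\sum_(g in G) (if ((g^-1)%g \in HV) then F (exist _ D hD) else 0)).
  apply: eq_bigr => g gG; rewrite mulmx_sumr summxE.
  case: (boolP ((g^-1)%g \in HV)) => hg.
    transitivity (\sum_(y in G) (if ((x^-1 * y)%g \in HW) then F (exist _ D hD) else 0)).
      apply: eq_bigr => y yG.
      rewrite -scalemxAr mxE mulmxA -(rhoM repW) ?groupV //.
      have xyG : (x^-1 * y)%g \in G by rewrite groupM ?groupV.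
      have giG : (g^-1)%g \in G by rewrite groupV.
      rewrite (stab_ind repW hHW xyG) (stab_ind repV hHV giG) hg mulr1.
      case: ifP => hy; last by rewrite mulr0.
      rewrite mulr1.
      have -> : (HV :* (g^-1 * y) * HW)%g = D.
        rewrite -eD -(dc_eq x hg hy); congr (_ :* _ * _)%g.
        by rewrite -mulgA mulKVg.
      by have := Fext_val F (exist _ D hD).
    by apply: sum_if_const; exists x; rewrite ?mulVg ?group1.
  rewrite big1 // => y yG.
  have giG : (g^-1)%g \in G by rewrite groupV.
  by rewrite -scalemxAr mxE (stab_ind repV hHV giG) (negbTE hg) mulr0 mul0r.
by apply: sum_if_const; exists 1%g; rewrite ?invg1 ?group1.
Qed.

Lemma hom0 phi : hom phi -> phi 0 = 0.
Proof. by move=> [_ hZ _]; have := hZ 0 0; rewrite !scale0r. Qed.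

Lemma hom_sum phi (hp : hom phi) (I : Type) (r : seq I) (P : pred I) (F : I -> 'cV[K]_n) :
  phi (\sum_(i <- r | P i) F i) = \sum_(i <- r | P i) phi (F i).
Proof. by case: (hp) => hD _ _; apply: big_morph => //; exact: hom0. Qed.

Lemma coef_inj phi1 phi2 : hom phi1 -> hom phi2 ->
  (forall x, x \in G -> coef phi1 x = coef phi2 x) -> phi1 =1 phi2.
Proof.
move=> h1 h2 hc.
have e0 : phi1 (eV jV) = phi2 (eV jV).
  apply/matrixP => l z; rewrite ord1; have [t tG <-] := trW l.
  have tiG : (t^-1)%g \in G by rewrite groupV.
  have key : forall phi, coef phi t =
      rW (t^-1)%g jW (sgm rW t jW) * phi (eV jV) (sgm rW t jW) 0.
    move=> phi; rewrite /coef.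
    have := coordM repW (sgm rW t jW) (phi (eV jV)) 0 tiG.
    by rewrite (sigVK repW _ tG).
  have nz : rW (t^-1)%g jW (sgm rW t jW) != 0.
    have := (sig_col repW (sgm rW t jW) tiG).1; by rewrite (sigVK repW _ tG).
  apply: (mulK_cancel nz); by rewrite -!key hc.
have ek : forall k, phi1 (eV k) = phi2 (eV k).
  move=> k; have [t tG <-] := trV k.
  have [a0 _] := sig_col repV jV tG.
  have [d hd] := Ksf a0.
  have ee : eV (sgm rV t jV) = d *: (rV t *m eV jV).
    by rewrite (rho_delta repV) // scalerA mulrC hd scale1r.
  case: h1 => _ z1 q1; case: h2 => _ z2 q2.
  by rewrite ee z1 z2 q1 // q2 // e0.
move=> v; rewrite [v]matrix_sum_delta.
under eq_bigr do rewrite big_ord1.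
rewrite (hom_sum h1) (hom_sum h2); apply: eq_bigr => k _.
case: h1 => _ z1 _; case: h2 => _ z2 _.
by rewrite z1 z2 ek.
Qed.

Lemma main_bij : exists f : {phi : 'cV[K]_n -> 'cV[K]_m | hom phi} -> (DC -> K),
  bijective f.
Proof.
pose f := fun (P : {phi : 'cV[K]_n -> 'cV[K]_m | hom phi}) (D : DC) =>
  coef (sval P) (repr (val D)).
pose g := fun F : DC -> K =>
  exist (fun phi => hom phi) (phiF F) (phiF_hom F).
exists f, g.
- case=> phi hp; rewrite /g /f /=; apply: sig_eq.
  apply: functional_extensionality => v.
  apply: (coef_inj (phiF_hom _) hp) => x xG.
  rewrite -(coef_repr (phiF_hom _) xG) -(coef_repr hp xG).
  by have := coef_phiF (fun D : DC => coef phi (repr (val D))) (exist (fun D => D \in dcosets HV G HW) _ (dcP xG)).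
- move=> F; apply: functional_extensionality => D; exact: coef_phiF.
Qed.

End Homs.
End KFacts.

Unset Implicit Arguments.
Set Strict Implicit.
Theorem proposition3p20 (gT : finGroupType) (G : {group gT})
    (K : comNzSemiRingType) (K_semifield : semifield K)
    (K_idem : idempotent_semiring K)
    (n m : nat) (rhoV : gT -> 'M[K]_n) (rhoW : gT -> 'M[K]_m)
    (repV : is_rep G rhoV) (repW : is_rep G rhoW)
    (indV : indecomposable G rhoV) (indW : indecomposable G rhoW)
    (HV HW : {group gT})
    (HV_corr : corresponding_subgroup G rhoV HV)
    (HW_corr : corresponding_subgroup G rhoW HW) :
  exists f : {phi : 'cV[K]_n -> 'cV[K]_m | rep_hom G rhoV rhoW phi} ->
             ({D : {set gT} | D \in dcosets HV G HW} -> K),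
    bijective f.
Proof.
have [LV [blV stV]] := HV_corr.
have [LW [blW stW]] := HW_corr.
have [jV hLV] := basis_line_std K_semifield K_idem blV.
have [jW hLW] := basis_line_std K_semifield K_idem blW.
have hHV := stab_char K_semifield K_idem repV hLV stV.
have hHW := stab_char K_semifield K_idem repW hLW stW.
have trV := transitive_ind K_semifield K_idem repV jV indV.
have trW := transitive_ind K_semifield K_idem repW jW indW.
exact: (main_bij K_semifield K_idem repV repW hHV hHW trV trW).
Qed.
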